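(* Let $t\ge1$ be an integer and let $p(\cdot\mid\cdot)$ be the transition probability density on $\mathbb{R}$ given by $$p(\mu_i\mid\mu_{i-1})=c_t\left(1+\frac{\mu_{i-1}^2}{t}\right)^{t/2}\left(1+\frac{\mu_{i-1}^2}{t}+\frac{\mu_i^2}{t}\right)^{-(t+1)/2},$$ where $c_t$ is the normalizing constant (depending only on $t$); equivalently, given $\mu_{i-1}$, the variable $\mu_i(1+\mu_{i-1}^2/t)^{-1/2}$ has the Student t distribution with $t$ degrees of freedom. Let $a>0$, set $$h(a)=\left\{a^2\left[\left(1+\frac{a^2}{t}\right)^{t/(t+1)}-1\right]^{-1}-t\right\}^{1/2},$$ and define the subprobability density $$p_{\min}(\mu)=\begin{cases}p(\mu\mid a)&\text{for }|\mu|\le h(a),\\ p(\mu\mid 0)&\text{for }|\mu|>h(a).\end{cases}$$ Then $|\mu_{i-1}|\le a$ implies $p(\mu_i\mid\mu_{i-1})\ge p_{\min}(\mu_i)$ for all $\mu_i$. Consequently, letting $\nu$ be the probability measure with density $p_{\min}/\beta$, the transition kernel $P$ with density $p(\cdot\mid\cdot)$ satisfies $P(x,\cdot)\ge\beta\mathbf{1}(x\in J)\nu(\cdot)$ for all $x$, with $J=[-a,a]$ and $$\beta=1-\Pr\left(|\vartheta|\le h(a)\right)+\Pr\left(|\vartheta|\le\left(1+\frac{a^2}{t}\right)^{-1/2}h(a)\right),$$ where $\vartheta$ has the Student t distribution with $t$ degrees of freedom.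
   Context: This is the transition density of the $\mu$-marginal of the two-step Gibbs sampler for the posterior of $(\mu,\kappa)$ in a normal model $N(\mu,\kappa^{-1})$ with $t$ observations, prior $p(\mu,\kappa)\propto\kappa^{-1}$, normalized to sample mean $0$ and $s^2=t$. *)

(* Defs.v *)
From HB Require Import structures.
From mathcomp Require Import all_boot all_order all_algebra.
From mathcomp Require Import all_classical all_reals all_analysis.
Set Implicit Arguments. Unset Strict Implicit. Unset Printing Implicit Defensive.
Import Order.TTheory GRing.Theory Num.Theory.
Import numFieldNormedType.Exports.
Local Open Scope classical_set_scope.
Local Open Scope ring_scope.

Section Defs.
Variable R : realType.
Notation mu := (@lebesgue_measure R).

Definition tkern (t : nat) (u : R) : R :=
  (1 + u ^+ 2 / t%:R) `^ (- ((t%:R + 1) / 2)).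

Definition student_c (t : nat) : R :=
  (fine (\int[mu]_u (tkern t u)%:E))^-1.

Definition student_pdf (t : nat) (u : R) : R := student_c t * tkern t u.

Definition student_Pr_abs_le (t : nat) (r : R) : R :=
  fine (\int[mu]_(u in [set u : R | `|u| <= r]) (student_pdf t u)%:E).

Definition pdens (t : nat) (x y : R) : R :=
  student_c t * (1 + x ^+ 2 / t%:R) `^ (t%:R / 2)
  * (1 + x ^+ 2 / t%:R + y ^+ 2 / t%:R) `^ (- ((t%:R + 1) / 2)).

Definition hfun (t : nat) (a : R) : R :=
  Num.sqrt (a ^+ 2 / ((1 + a ^+ 2 / t%:R) `^ (t%:R / (t%:R + 1)) - 1) - t%:R).

Definition pmin (t : nat) (a y : R) : R :=
  if `|y| <= hfun t a then pdens t a y else pdens t 0 y.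

Definition beta (t : nat) (a : R) : R :=
  1 - student_Pr_abs_le t (hfun t a)
    + student_Pr_abs_le t ((1 + a ^+ 2 / t%:R) `^ (- (1 / 2)) * hfun t a).

Definition Pkern (t : nat) (x : R) (A : set R) : \bar R :=
  \int[mu]_(y in A) (pdens t x y)%:E.

Definition nu (t : nat) (a : R) (A : set R) : \bar R :=
  \int[mu]_(y in A) (pmin t a y / beta t a)%:E.

End Defs.

(* Main.v *)
Require Import Defs.
From HB Require Import structures.
From mathcomp Require Import all_boot all_order all_algebra.
From mathcomp Require Import all_classical all_reals all_analysis.
From mathcomp Require Import ring lra measurable_realfun.
Import Order.TTheory GRing.Theory Num.Theory.
Import numFieldNormedType.Exports.
Local Open Scope classical_set_scope.
Local Open Scope ring_scope.

Section P1.
Variable R : realType.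

Lemma bern (r z : R) : 0 < r -> r < 1 -> 0 < z -> z `^ r <= 1 + r * (z - 1).
Proof.
move=> r0 r1 z0.
have r10 : 0 < 1 - r by rewrite subr_gt0.
have i1 : 0 < r^-1 by rewrite invr_gt0.
have i2 : 0 < (1 - r)^-1 by rewrite invr_gt0.
have pq : r^-1^-1 + (1 - r)^-1^-1 = 1 by rewrite !invrK; ring.
have := @conjugate_powR R (z `^ r) 1 (r^-1) ((1 - r)^-1) (powR_ge0 _ _) ler01 i1 i2 pq.
rewrite -powRrM mulfV ?gt_eqF // powRr1 ?(ltW z0) // powR1 !invrK mulr1 => H.
apply: (le_trans H); lra.
Qed.

Lemma tangent (r S e : R) : 0 < r -> r < 1 -> 0 < S -> 0 < e ->
  e `^ r <= S `^ r + r * S `^ r / S * (e - S).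
Proof.
move=> r0 r1 S0 e0.
have E : e `^ r = S `^ r * (e / S) `^ r.
  by rewrite -powRM ?ltW ?divr_gt0 // mulrC divfK // gt_eqF.
rewrite E.
have := @bern r (e / S) r0 r1 (divr_gt0 e0 S0) => H.
have P0 := powR_ge0 S r.
have H3 : S `^ r * (e / S) `^ r <= S `^ r * (1 + r * (e / S - 1)) by rewrite ler_wpM2l.
apply: (le_trans H3).
suff -> : S `^ r * (1 + r * (e / S - 1)) = S `^ r + r * S `^ r / S * (e - S) by [].
by field; rewrite gt_eqF.
Qed.


Lemma key (r V S B m : R) : 0 < r -> r < 1 -> 0 <= V -> 1 <= S -> S <= B ->
  0 <= m -> m * (1 + V) <= 1 -> m * (B + V) <= B `^ r -> m * (S + V) <= S `^ r.
Proof.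
move=> r0 r1 V0 S1 SB m0 h1 h2.
have S0 : 0 < S by lra.
have B0 : 0 < B by lra.
have t1 := @tangent r S 1 r0 r1 S0 ltr01.
have t2 := @tangent r S B r0 r1 S0 B0.
rewrite powR1 in t1.
move: t1 t2 h2; set P := S `^ r; set Q := B `^ r; set K := r * P / S => t1 t2 h2.
have k1 : (B - S) * 1 <= (B - S) * (P + K * (1 - S)) by rewrite ler_wpM2l ?subr_ge0.
have k2 : (S - 1) * Q <= (S - 1) * (P + K * (B - S)) by rewrite ler_wpM2l ?subr_ge0.
have k3 : (B - S) * (m * (1 + V)) <= (B - S) * 1 by rewrite ler_wpM2l ?subr_ge0.
have k4 : (S - 1) * (m * (B + V)) <= (S - 1) * Q by rewrite ler_wpM2l ?subr_ge0.
have k5 : (B - 1) * (m * (S + V)) <= (B - 1) * P.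
  have -> : (B - 1) * (m * (S + V)) = (B - S) * (m * (1 + V)) + (S - 1) * (m * (B + V)) by ring.
  have -> : (B - 1) * P = (B - S) * (P + K * (1 - S)) + (S - 1) * (P + K * (B - S)) by ring.
  lra.
have [B1|B1] := eqVneq B 1.
  have S1' : S = 1 by lra.
  rewrite /P; clear k1 k2 k3 k4 k5 t1 t2 h2; clear K Q P; subst S.
  by rewrite powR1.
by rewrite -(@ler_pM2l _ (B - 1)) // subr_gt0 lt_neqAle eq_sym B1 (le_trans S1 SB).
Qed.


Lemma pdens_phi (t : nat) (x y : R) : (1 <= t)%N ->
  pdens t x y = student_c R t *
   (((1 + x ^+ 2 / t%:R) `^ (t%:R / (t%:R + 1)) / ((1 + x ^+ 2 / t%:R) + y ^+ 2 / t%:R))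
     `^ ((t%:R + 1) / 2)).
Proof.
move=> t1.
have T0 : 0 < t%:R :> R by rewrite ltr0n.
have S0 : 0 <= 1 + x ^+ 2 / t%:R by rewrite addr_ge0 // divr_ge0 // sqr_ge0.
have SV0 : 0 < 1 + x ^+ 2 / t%:R + y ^+ 2 / t%:R.
  by rewrite ltr_pwDl ?divr_ge0 ?sqr_ge0 // ltr_pwDl ?divr_ge0 ?sqr_ge0.
rewrite /pdens -mulrA; congr (_ * _).
rewrite powRM ?powR_ge0 ?invr_ge0 ?ltW // -powRrM.
have -> : t%:R / (t%:R + 1) * ((t%:R + 1) / 2) = t%:R / 2 :> R.
  by field; rewrite gt_eqF // ltr_wpDl.
congr (_ * _).
by rewrite -(powR_inv1 (ltW SV0)) -powRrM mulN1r.
Qed.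


Lemma student_c_ge0 (t : nat) : 0 <= student_c R t.
Proof. by rewrite /student_c invr_ge0 fine_ge0 // integral_ge0 // => u _; rewrite lee_fin powR_ge0. Qed.

Lemma phi_mono (t : nat) (x y z : R) : (1 <= t)%N ->
  let T := t%:R in let V := y ^+ 2 / T in let r := T / (T + 1) in
  let S := 1 + x ^+ 2 / T in let e := 1 + z ^+ 2 / T in
  e `^ r / (e + V) * (S + V) <= S `^ r ->
  pdens t z y <= pdens t x y.
Proof.
move=> t1 T V r S e H.
have T0 : 0 < T by rewrite ltr0n.
have V0 : 0 <= V by rewrite divr_ge0 // sqr_ge0.
have S1 : 1 <= S by rewrite lerDl divr_ge0 // sqr_ge0.
have e1 : 1 <= e by rewrite lerDl divr_ge0 // sqr_ge0.
rewrite !pdens_phi //.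
apply: ler_wpM2l; first exact: student_c_ge0.
apply: ge0_ler_powR.
- by rewrite divr_ge0 ?ltW // ltr_wpDl.
- by rewrite nnegrE divr_ge0 ?powR_ge0 // addr_ge0 // (le_trans ler01).
- by rewrite nnegrE divr_ge0 ?powR_ge0 // addr_ge0 // (le_trans ler01).
rewrite -/T -/V -/r -/S -/e ler_pdivlMr; first exact: H.
exact: (lt_le_trans ltr01 (ler_wpDr V0 S1)).
Qed.


Lemma pointwise (t : nat) (a x y : R) : (1 <= t)%N -> 0 < a -> `|x| <= a ->
  pmin t a y <= pdens t x y.
Proof.
move=> t1 a0 xa.
set T : R := t%:R.
have T0 : 0 < T by rewrite ltr0n.
set V := y ^+ 2 / T; set r := T / (T + 1); set S := 1 + x ^+ 2 / T.
set B := 1 + a ^+ 2 / T; set Q := B `^ r.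
have V0 : 0 <= V by rewrite divr_ge0 // sqr_ge0.
have r0 : 0 < r by rewrite divr_gt0 // ltr_wpDr.
have r1 : r < 1 by rewrite ltr_pdivrMr ?mul1r ?ltrDl // ltr_wpDr.
have S1 : 1 <= S by rewrite lerDl divr_ge0 // sqr_ge0.
have B1 : 1 < B by rewrite ltrDl divr_gt0 // exprn_gt0.
have SB : S <= B.
  rewrite lerD2l ler_pM2r ?invr_gt0 //.
  move: xa; rewrite ler_norml => /andP [h1 h2]; nra.
have Q1 : 1 < Q.
  have := @gt0_ltr_powR R r r0 1 B; rewrite powR1; apply => //; rewrite nnegrE; lra.
have QB : Q <= B by apply: ler1_powR; lra.
have ea : a ^+ 2 = T * (B - 1) by rewrite /B; field; rewrite gt_eqF.
have ey : y ^+ 2 = T * V by rewrite /V; field; rewrite gt_eqF.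
set D := a ^+ 2 / (Q - 1) - T.
have D0 : 0 <= D.
  rewrite /D subr_ge0 ler_pdivlMr ?subr_gt0 // ea ler_pM2l //; lra.
have hE : (`|y| <= hfun t a) = (y ^+ 2 <= D) by rewrite /hfun -sqrtr_sqr ler_sqrt.
have cE : (y ^+ 2 <= D) = ((V + 1) * (Q - 1) <= B - 1).
  rewrite /D lerBrDr ler_pdivlMr ?subr_gt0 // ea ey.
  have -> : (T * V + T) * (Q - 1) = T * ((V + 1) * (Q - 1)) by ring.
  by rewrite ler_pM2l.
rewrite /pmin; case: ifPn => hy; move: hy; rewrite ?hE ?cE => hy.
- apply: phi_mono => //; rewrite -/T -/V -/r -/S -/B -/Q.
  apply: (@key r V S B) => //.
  + by rewrite divr_ge0 //; lra.
  + rewrite mulrAC ler_pdivrMr ?mul1r; lra.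
  + rewrite divfK //; lra.
- apply: phi_mono => //; rewrite -/T -/V -/r -/S.
  have -> : 1 + 0 ^+ 2 / T = 1 by rewrite expr0n /= mul0r addr0.
  rewrite powR1.
  apply: (@key r V S B) => //.
  + by rewrite divr_ge0 //; lra.
  + rewrite divfK //; lra.
  + move: hy; rewrite -ltNge => hy.
    rewrite mulrAC mul1r ler_pdivrMr -/Q; lra.
Qed.

End P1.

Section P2.
Variable R : realType.
Notation mu := (@lebesgue_measure R).

Lemma cont_powR (p x : R) : 0 < x -> {for x, continuous (fun y => y `^ p)}.
Proof.
move=> x0; apply: differentiable_continuous; apply/derivable1_diffP.
by apply: derivable_powR; rewrite in_itv /= andbT.
Qed.

Lemma cont_gen (T al p : R) : 0 < T -> 0 < al ->
  continuous (fun y : R => (al + y ^+ 2 / T) `^ p).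
Proof.
move=> T0 al0 y.
apply: (@continuous_comp _ _ _ (fun y : R => al + y ^+ 2 / T) (fun z => z `^ p)).
  apply: cvgD; first exact: cvg_cst.
  apply: cvgM; last exact: cvg_cst.
  exact: (@exprn_continuous R 2 y).
apply: cont_powR; have : 0 <= y ^+ 2 / T by rewrite divr_ge0 ?sqr_ge0 ?ltW.
lra.
Qed.


Lemma cont_g0 : continuous (fun u : R => (1 + u ^+ 2)^-1).
Proof.
move=> y; apply: cvgV.
  by rewrite gt_eqF // ltr_pwDl ?sqr_ge0.
apply: cvgD; first exact: cvg_cst.
exact: (@exprn_continuous R 2 y).
Qed.

Lemma int_g0 : (\int[mu]_u ((1 + u ^+ 2)^-1)%:E = (pi)%:E)%E.
Proof.
rewrite (@ge0_symfun_integralT R (fun u : R => (1 + u ^+ 2)^-1)).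
- rewrite -set_itvcy.
  rewrite (@ge0_continuous_FTC2y R (fun u : R => (1 + u ^+ 2)^-1) atan 0 (pi / 2)).
  + by rewrite atan0 -EFinB subr0 -EFinM; congr (_%:E); field.
  + by move=> x _; rewrite invr_ge0 addr_ge0 ?sqr_ge0.
  + exact/continuous_subspaceT/cont_g0.
  + exact: cvgy_atan.
  + by move=> x _; exact: derivable_atan.
  + exact/cvg_at_right_filter/continuous_atan.
  + by move=> x _; rewrite derive1_atan.
- by move=> x; rewrite invr_ge0 addr_ge0 ?sqr_ge0.
- exact: cont_g0.
- by move=> x /=; rewrite sqrrN.
Qed.


Variable t : nat.
Hypothesis t1 : (1 <= t)%N.
Local Notation T := (t%:R : R).
Let T0 : 0 < T. Proof. by rewrite ltr0n. Qed.
Let T1 : 1 <= T. Proof. by rewrite ler1n. Qed.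

Lemma tkern_ge0 (u : R) : 0 <= tkern t u. Proof. exact: powR_ge0. Qed.

Lemma tkern_gt0 (u : R) : 0 < tkern t u.
Proof.
apply: powR_gt0; have : 0 <= u ^+ 2 / T by rewrite divr_ge0 ?sqr_ge0 ?ltW.
lra.
Qed.

Lemma tkern_cont : continuous (@tkern R t).
Proof. exact: (@cont_gen T 1 _ T0 ltr01). Qed.

Lemma tkern_meas : measurable_fun setT (@tkern R t).
Proof. exact: measurable_realfun.continuous_measurable_fun tkern_cont. Qed.

Lemma tkern_le (u : R) : tkern t u <= T * (1 + u ^+ 2)^-1.
Proof.
have b1 : 1 <= 1 + u ^+ 2 / T by rewrite lerDl divr_ge0 ?sqr_ge0 ?ltW.
apply: (@le_trans _ _ ((1 + u ^+ 2 / T) `^ (-1))).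
  apply: ler_powR => //.
  rewrite lerN2 ler_pdivlMr ?mul1r //; move: T1; lra.
rewrite powR_inv1; last lra.
have -> : (1 + u ^+ 2 / T)^-1 = T * (T + u ^+ 2)^-1.
  field; apply/andP; split; apply: lt0r_neq0 => //.
  by have := T0; have := sqr_ge0 u; lra.
have u0 := sqr_ge0 u.
apply: ler_wpM2l; first exact: ltW T0.
have h0 := T0; have h1 := T1; rewrite lef_pV2 ?posrE; lra.
Qed.


Lemma meas_g0 : measurable_fun setT (fun u : R => (1 + u ^+ 2)^-1).
Proof. exact: measurable_realfun.continuous_measurable_fun cont_g0. Qed.

Lemma int_tkern_fin : (\int[mu]_u (tkern t u)%:E < +oo)%E.
Proof.
apply: (@le_lt_trans _ _ (\int[mu]_u (T%:E * ((1 + u ^+ 2)^-1)%:E))%E).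
  apply: ge0_le_integral => //.
  - by move=> x _; rewrite lee_fin tkern_ge0.
  - by apply/measurable_EFinP; exact: tkern_meas.
  - under eq_fun do rewrite -EFinM.
    by apply/measurable_EFinP; apply: measurable_funM => //; exact: meas_g0.
  - by move=> x _; rewrite -EFinM lee_fin tkern_le.
rewrite ge0_integralZl //.
- by rewrite int_g0 -EFinM ltry.
- by apply/measurable_EFinP; exact: meas_g0.
- by move=> x _; rewrite lee_fin invr_ge0 addr_ge0 ?sqr_ge0.
Qed.

Lemma tkern_anti (u rho : R) : `|u| <= rho -> tkern t rho <= tkern t u.
Proof.
move=> urho.
have h0 := T0.
have q0 : 0 <= (T + 1) / 2 by rewrite divr_ge0 //; lra.
have pb (z : R) : 0 < (1 + z ^+ 2 / T) `^ ((T + 1) / 2).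
  apply: powR_gt0; have : 0 <= z ^+ 2 / T by rewrite divr_ge0 ?sqr_ge0 ?ltW.
  lra.
rewrite /tkern !powRN lef_pV2 ?posrE ?pb //.
apply: ge0_ler_powR => //.
- by rewrite nnegrE addr_ge0 // divr_ge0 ?sqr_ge0 // ltW.
- by rewrite nnegrE addr_ge0 // divr_ge0 ?sqr_ge0 // ltW.
rewrite lerD2l ler_pM2r ?invr_gt0 //.
have : -rho <= u <= rho by rewrite -ler_norml.
move=> /andP [a b]; nra.
Qed.

Lemma lb_int (D : set R) (f : R -> R) (lo hi m : R) :
  measurable D -> `[lo, hi] `<=` D -> measurable_fun D f ->
  (forall x, D x -> 0 <= f x) -> (forall x, lo <= x <= hi -> m <= f x) ->
  0 <= m -> lo < hi ->
  ((m * (hi - lo))%:E <= \int[mu]_(x in D) (f x)%:E)%E.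
Proof.
move=> mD sD mf f0 fm m0 lohi.
apply: (@le_trans _ _ (\int[mu]_(x in `[lo, hi]) (f x)%:E)%E); last first.
  by apply: ge0_subset_integral => //; first exact/measurable_EFinP.
apply: (@le_trans _ _ (\int[mu]_(x in `[lo, hi]) (cst m%:E x))%E).
  rewrite integral_cst //.
  have := lebesgue_measure_itv `[lo, hi]; rewrite /= lte_fin lohi => ->.
  by rewrite -EFinB -EFinM.
apply: ge0_le_integral => //.
- by apply/measurable_EFinP; apply: measurable_funS mf.
Qed.


Definition I0 := fine (\int[mu]_u (tkern t u)%:E)%E.

Lemma int_tkern_E : (\int[mu]_u (tkern t u)%:E)%E = I0%:E.
Proof.
rewrite /I0 fineK // ge0_fin_numE; first exact: int_tkern_fin.
by apply: integral_ge0 => x _; rewrite lee_fin tkern_ge0.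
Qed.

Lemma I0_gt0 : 0 < I0.
Proof.
have := @lb_int setT (tkern t) 0 1 (tkern t 1) measurableT (fun _ _ => I)
  tkern_meas (fun x _ => tkern_ge0 x).
rewrite int_tkern_E subr0 mulr1 lee_fin => H.
apply: lt_le_trans (tkern_gt0 1) _; apply: H => //; last exact: tkern_ge0.
move=> x /andP [x0 x1]; apply: tkern_anti; rewrite ger0_norm //.
Qed.

Lemma studc_E : student_c R t = I0^-1.
Proof. by []. Qed.

Lemma studc_gt0 : 0 < student_c R t.
Proof. by rewrite studc_E invr_gt0 I0_gt0. Qed.

Lemma student_ge0 (u : R) : 0 <= student_pdf t u.
Proof. by rewrite /student_pdf mulr_ge0 ?tkern_ge0 // ltW // studc_gt0. Qed.

Lemma student_meas : measurable_fun setT (@student_pdf R t).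
Proof. by apply: measurable_funM => //; exact: tkern_meas. Qed.

Lemma int_student : (\int[mu]_u (student_pdf t u)%:E)%E = 1%E.
Proof.
rewrite /student_pdf; under eq_integral do rewrite EFinM.
rewrite ge0_integralZl //.
- by rewrite int_tkern_E -EFinM studc_E mulVf // gt_eqF // I0_gt0.
- by apply/measurable_EFinP; exact: tkern_meas.
- by move=> x _; rewrite lee_fin tkern_ge0.
- by rewrite lee_fin ltW // studc_gt0.
Qed.

Lemma absset (r : R) : [set u : R | `|u| <= r] = `[-r, r]%classic.
Proof. by apply/seteqP; split => u /=; rewrite in_itv /= ler_norml. Qed.

Lemma Pr_E (r : R) : ((student_Pr_abs_le t r)%:E =
   \int[mu]_(u in [set u : R | (`|u| <= r)%R]) (student_pdf t u)%:E)%E /\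
   0 <= student_Pr_abs_le t r <= 1.
Proof.
have h0 : (0 <= \int[mu]_(u in [set u : R | (`|u| <= r)%R]) (student_pdf t u)%:E)%E.
  by apply: integral_ge0 => x _; rewrite lee_fin student_ge0.
have h1 : (\int[mu]_(u in [set u : R | (`|u| <= r)%R]) (student_pdf t u)%:E <= 1)%E.
  rewrite -int_student; apply: ge0_subset_integral => //.
  - by rewrite absset.
  - by apply/measurable_EFinP; exact: student_meas.
  - by move=> x _; rewrite lee_fin student_ge0.
have fin : (\int[mu]_(u in [set u : R | (`|u| <= r)%R]) (student_pdf t u)%:E)%E \is a fin_num.
  by rewrite ge0_fin_numE // (le_lt_trans h1) // ltry.
rewrite /student_Pr_abs_le fineK //; split => //.
by rewrite -lee_fin fineK // -lee_fin fineK // h0 h1.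
Qed.

End P2.

Section P3.
Variable R : realType.
Notation mu := (@lebesgue_measure R).

Lemma dF (s : R) : ((fun u : R => s * u)^`())%classic = cst s.
Proof.
apply/funext => x. rewrite (@derive1Ml R id x s) ?derive1_id ?mulr1 //.
Qed.

Lemma derF (s x : R) : derivable (fun u : R => s * u) x 1.
Proof. apply: derivableM => //. Qed.

Lemma contF (s : R) : continuous (fun u : R => s * u).
Proof. by move=> x; apply: differentiable_continuous; apply/derivable1_diffP; exact: derF. Qed.

Lemma dF' (s : R) : (( *%R s)^`())%classic = cst s.
Proof. exact: dF. Qed.

Lemma derF' (s x : R) : derivable ( *%R s) x 1.
Proof. exact: derF. Qed.

Lemma contF' (s : R) : continuous ( *%R s).
Proof. exact: contF. Qed.

Variable t : nat.
Hypothesis t1 : (1 <= t)%N.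
Local Notation T := (t%:R : R).
Let T0 : 0 < T. Proof. by rewrite ltr0n. Qed.

Lemma pdens_cont (x : R) : continuous (@pdens R t x).
Proof.
move=> y; apply: cvgM; first exact: cvg_cst.
have h0 := T0.
apply: (@cont_gen R T (1 + x ^+ 2 / T)) => //.
have : 0 <= x ^+ 2 / T by rewrite divr_ge0 ?sqr_ge0 ?ltW.
lra.
Qed.


Lemma subst_int (a h : R) : 0 < a -> 0 <= h ->
  (\int[mu]_(y in [set y : R | (`|y| <= h)%R]) (pdens t a y)%:E)%E =
  (student_Pr_abs_le t ((1 + a ^+ 2 / T) `^ (- (1 / 2)) * h))%:E.
Proof.
move=> a0 h0.
have hT := T0.
set B := 1 + a ^+ 2 / T.
have B1 : 1 <= B by rewrite /B lerDl divr_ge0 ?sqr_ge0 ?ltW.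
set s := B `^ (1 / 2).
have s0 : 0 < s by apply: powR_gt0; lra.
have sinv : B `^ (- (1 / 2)) = s^-1 by rewrite powRN.
rewrite sinv (@Pr_E R t t1 _).1 !absset.
set b := s^-1 * h.
have b0 : 0 <= b by rewrite /b mulr_ge0 // invr_ge0 ltW.
have -> : `[- h, h]%classic = `[(fun u => s * u) (- b), (fun u => s * u) b]%classic.
  by rewrite /= mulrN /b mulVKf // gt_eqF.
rewrite integration_by_substitution_increasing.
- apply: eq_integral => u _; congr (_%:E).
  rewrite dF'; change (pdens t a (s * u) * s = student_pdf t u).
  rewrite /pdens /student_pdf /tkern.
  have e1 : (s * u) ^+ 2 = B * u ^+ 2.
    have s2 : s ^+ 2 = B.
      by rewrite /s -powR_mulrn ?powR_ge0 // -powRrM mul1r mulVf ?pnatr_eq0 // powRr1 //; lra.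
    by rewrite exprMn s2.
  rewrite e1.
  have -> : B + B * u ^+ 2 / T = B * (1 + u ^+ 2 / T) by ring.
  have u0' : 0 <= u ^+ 2 / T by rewrite divr_ge0 ?sqr_ge0 ?ltW.
  have u0 : 0 <= 1 + u ^+ 2 / T by lra.
  rewrite powRM //; last lra.
  have Bn : B != 0 by rewrite gt_eqF //; lra.
  have kB : B `^ (T / 2) * B `^ (- ((T + 1) / 2)) * s = 1.
    rewrite /s -powRD; last by rewrite Bn implybT.
    rewrite -powRD; last by rewrite Bn implybT.
    have -> : T / 2 + - ((T + 1) / 2) + 1 / 2 = 0 by field.
    exact: powRr0.
  rewrite -/B.
  transitivity (student_c R t * (1 + u ^+ 2 / T) `^ (- ((T + 1) / 2)) *
     (B `^ (T / 2) * B `^ (- ((T + 1) / 2)) * s)); first ring.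
  by rewrite kB mulr1.
- lra.
- by move=> x y _ _ xy; rewrite ltr_pM2l.
- by rewrite dF'; move=> x _; exact: cst_continuous.
- by rewrite dF'; apply/cvg_ex; exists s; exact: cvg_cst.
- by rewrite dF'; apply/cvg_ex; exists s; exact: cvg_cst.
- split.
  + by move=> x _; exact: derF'.
  + exact/cvg_at_right_filter/contF'.
  + exact/cvg_at_left_filter/contF'.
- exact/continuous_subspaceT/pdens_cont.
Qed.

End P3.

Section P4.
Variable R : realType.
Notation mu := (@lebesgue_measure R).
Variable t : nat.
Hypothesis t1 : (1 <= t)%N.
Local Notation T := (t%:R : R).
Let T0 : 0 < T. Proof. by rewrite ltr0n. Qed.

Lemma pdens_ge0 (x y : R) : 0 <= pdens t x y.
Proof.
rewrite /pdens mulr_ge0 ?powR_ge0 // mulr_ge0 ?powR_ge0 //.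
exact: ltW (@studc_gt0 R t t1).
Qed.

Lemma pdens_meas (x : R) : measurable_fun setT (@pdens R t x).
Proof. exact: continuous_measurable_fun (@pdens_cont R t t1 x). Qed.

Lemma pdens0 (y : R) : pdens t 0 y = student_pdf t y.
Proof.
rewrite /pdens /student_pdf /tkern expr0n /= mul0r addr0 powR1 mulr1.
by [].
Qed.

Lemma pmin_ge0 (a y : R) : 0 <= pmin t a y.
Proof. by rewrite /pmin; case: ifP => _; exact: pdens_ge0. Qed.

Lemma pmin_meas (a : R) : measurable_fun setT (@pmin R t a).
Proof.
set E := [set y : R | `|y| <= hfun t a].
have mE : measurable E by rewrite /E absset.
rewrite -(setUv E); apply/measurable_funU => //; first exact: measurableC.
split.
- apply: (eq_measurable_fun (pdens t a)); last exact: measurable_funTS (pdens_meas a).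
  by move=> y; rewrite inE /= => hy; rewrite /pmin hy.
- apply: (eq_measurable_fun (pdens t 0)); last exact: measurable_funTS (pdens_meas 0).
  by move=> y; rewrite inE /= => /negP hy; rewrite /pmin (negbTE hy).
Qed.

End P4.

Theorem proposition7p2 (R : realType) (t : nat) (a : R) :
  (1 <= t)%N -> 0 < a ->
  (* pointwise minorization *)
  (forall x y : R, `|x| <= a -> pmin t a y <= pdens t x y) /\
  (* nu is a probability measure: p_min integrates to beta > 0 *)
  (0 < beta t a /\
   (\int[@lebesgue_measure R]_y (pmin t a y)%:E = (beta t a)%:E)%E) /\
  (* kernel minorization P(x,.) >= beta 1(x in [-a,a]) nu(.) *)
  (forall (x : R) (A : set R), measurable A ->
     ((beta t a * \1_(`[- a, a]) x)%:E * nu t a A <= Pkern t x A)%E).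
Proof.
move=> t1 a0.
have hp : forall x y : R, `|x| <= a -> pmin t a y <= pdens t x y.
  by move=> x y xa; exact: (@pointwise R t a x y t1 a0 xa).
set h := hfun t a.
have h0 : 0 <= h by exact: sqrtr_ge0.
set h' := (1 + a ^+ 2 / t%:R) `^ (- (1 / 2)) * h.
set E := [set y : R | `|y| <= h].
have mE : measurable E by rewrite /E absset.
have [Ph PhE] := @Pr_E R t t1 h.
have [Ph' Ph'E] := @Pr_E R t t1 h'.
have bE : beta t a = 1 - student_Pr_abs_le t h + student_Pr_abs_le t h' by [].
have int_pmin : (\int[@lebesgue_measure R]_y (pmin t a y)%:E = (beta t a)%:E)%E.
  rewrite -(setUv E) ge0_integral_setU //; last 4 first.
  - exact: measurableC.
  - by rewrite setUv; apply/measurable_EFinP; exact: (@pmin_meas R t t1 a).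
  - by move=> y _; rewrite lee_fin (@pmin_ge0 R t t1).
  - exact/disj_setPCl.
  have e1 : (\int[@lebesgue_measure R]_(y in E) (pmin t a y)%:E =
             (student_Pr_abs_le t h')%:E)%E.
    rewrite -(@subst_int R t t1 a h a0 h0); apply: eq_integral => y.
    by rewrite inE /= => hy; rewrite /pmin hy.
  have e2 : (\int[@lebesgue_measure R]_(y in ~` E) (pmin t a y)%:E =
             \int[@lebesgue_measure R]_(y in ~` E) (student_pdf t y)%:E)%E.
    apply: eq_integral => y.
    by rewrite inE /= => /negP hy; rewrite /pmin (negbTE hy) pdens0.
  have e3 := @int_student R t t1.
  rewrite -(setUv E) ge0_integral_setU // in e3; last 4 first.
  - exact: measurableC.
  - by rewrite setUv; apply/measurable_EFinP; exact: (@student_meas R t t1).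
  - by move=> y _; rewrite lee_fin (@student_ge0 R t t1).
  - exact/disj_setPCl.
  rewrite -Ph in e3.
  rewrite e1 e2.
  set X := (\int[@lebesgue_measure R]_(y in ~` E) (student_pdf t y)%:E)%E in e3 *.
  have X0 : (0 <= X)%E by apply: integral_ge0 => y _; rewrite lee_fin (@student_ge0 R t t1).
  have Xfin : X \is a fin_num.
    rewrite ge0_fin_numE //; apply: (@le_lt_trans _ _ 1%E); last exact: ltry.
    by rewrite -e3 leeDr // lee_fin; case/andP: PhE.
  rewrite -(fineK Xfin) in e3 *.
  rewrite -EFinD in e3; move: e3 => /eqP; rewrite eqe => /eqP e3.
  by rewrite -EFinD bE; congr (_%:E); lra.
have bpos : 0 < beta t a.
  rewrite bE.
  have [hz|hpos] := eqVneq h 0.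
    have -> : h' = h by rewrite /h' hz mulr0.
    lra.
  have hpos' : 0 < h by rewrite lt_neqAle eq_sym hpos h0.
  have h'pos : 0 < h'.
    rewrite /h' mulr_gt0 // powR_gt0 //.
    have : 0 <= a ^+ 2 / t%:R by rewrite divr_ge0 ?sqr_ge0.
    lra.
  suff : 0 < student_Pr_abs_le t h' by case/andP: PhE; lra.
  have c0 := @studc_gt0 R t t1.
  have k0 := @tkern_gt0 R t t1 h'.
  have := @lb_int R [set u : R | `|u| <= h'] (student_pdf t) (- h') h'
    (student_Pr_abs_le t h' * 0 + student_c R t * tkern t h').
  rewrite mulr0 add0r -Ph' lee_fin => H.
  apply: lt_le_trans (H _ _ _ _ _ _ _); last first.
  - lra.
  - by rewrite mulr_ge0 // ltW.
  - move=> u hu; rewrite /student_pdf; apply: ler_wpM2l; first exact: ltW.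
    by apply: (@tkern_anti R t t1); rewrite ler_norml.
  - by move=> u _; exact: (@student_ge0 R t t1).
  - exact: measurable_funTS (@student_meas R t t1).
  - by rewrite absset.
  - by rewrite absset.
  - by rewrite mulr_gt0 ?mulr_gt0 //; lra.
split; first exact: hp.
split; first by split.
move=> x A mA; rewrite indicE.
have [xin|xout] := boolP (x \in `[- a, a]%classic).
- rewrite mulr1.
  have xa : `|x| <= a.
    by move: xin; rewrite inE /= in_itv /= ler_norml.
  rewrite /nu /Pkern -ge0_integralZl //; last 3 first.
  - apply/measurable_EFinP; apply: measurable_funM => //.
    exact: measurable_funTS (@pmin_meas R t t1 a).
  - by move=> y _; rewrite lee_fin divr_ge0 ?(@pmin_ge0 R t t1) // ltW.
  - by rewrite lee_fin ltW.
  under eq_integral do rewrite -EFinM mulrC divfK ?gt_eqF //.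
  apply: ge0_le_integral => //.
  - by move=> y _; rewrite lee_fin (@pmin_ge0 R t t1).
  - apply/measurable_EFinP; exact: measurable_funTS (@pmin_meas R t t1 a).
  - apply/measurable_EFinP; exact: measurable_funTS (@pdens_meas R t t1 x).
  - by move=> y _; rewrite lee_fin hp.
- rewrite mulr0 mul0e; apply: integral_ge0 => y _.
  by rewrite lee_fin (@pdens_ge0 R t t1).
Qed.
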